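(* Let $G\subseteq W(\mathsf D_n)$ be a subgroup satisfying both the (H1) condition and the minimality condition. Then the action of $G$ on the set of components of degenerate fibers $\{q_j^{\pm}: 1\le j\le n\}$ has at most three orbits.
   Context: Let $X\to\mathbb P^1$ be a standard conic bundle with $n$ degenerate geometric fibers $q_j^+\cup q_j^-$. $W(\mathsf D_n)$ is the group of signed permutations of the symbols $j^\pm\leftrightarrow q_j^\pm$ (generated by $\mathfrak S_n$ permuting indices and involutions $c_j$ exchanging $j^+,j^-$) having an even number of sign changes; it acts on $\mathrm{Pic}(\bar X)=\bigoplus_{i=-1}^n\mathbb Zl_i$ via $\Phi$: for $g=c_{j_1}\cdots c_{j_t}\tau$ ($t$ even), with $s(i)=-1$ if $i\in\{j_1,\dots,j_t\}$ else $1$, $\Phi(g)l_0=l_0$, $\Phi(g)l_{-1}=l_{-1}+\frac t2l_0-\sum_{s(i)=-1}l_i$, and for $v\ge1$, $u=\tau^{-1}(v)$: $\Phi(g)l_v=l_u$ if $s(u)=1$, $\Phi(g)l_v=l_0-l_u$ if $s(u)=-1$. $G$ satisfies (H1) if $\mathrm H^1(H,\mathrm{Pic}(\bar X))=0$ for all subgroups $H\subseteq G$. $G$ satisfies the minimality condition if it corresponds to a $k$-minimal conic bundle (no Galois-equivariant blow-down possible); for standard conic bundles this entails that for each $j$ the two components $q_j^+$ and $q_j^-$ lie in the same $G$-orbit. *)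

(* Defs.v *)
From HB Require Import structures.
From mathcomp Require Import all_boot all_order all_algebra all_fingroup.
Set Implicit Arguments. Unset Strict Implicit. Unset Printing Implicit Defensive.
Import GRing.Theory.
Local Open Scope ring_scope.

(* Symbols j^+ / j^- of the components q_j^+ / q_j^- : pairs (j, b) with
   j : 'I_n (the n degenerate fibers, indexed 0..n-1) and b = false for "+",
   b = true for "-". *)
Definition sym (n : nat) := ('I_n * bool)%type.

(* MathComp convention: (s * t) x = t (s x), i.e. products act left to right. *)

(* The set J of indices whose sign is changed by g = c_J tau (left-to-right):
   g(u^+) = tau(u)^{s(u)}. *)
Definition Jset n (g : {perm sym n}) : {set 'I_n} :=
  [set u | (g (u, false)).2].

(* W(D_n): signed permutations (commuting with the exchange j^+ <-> j^-)
   with an even number of sign changes. *)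
Definition WD n : {set {perm sym n}} :=
  [set g : {perm sym n} |
     [forall x : sym n, g (x.1, ~~ x.2) == ((g x).1, ~~ (g x).2)]
     && ~~ odd #|Jset g| ].

(* Pic(X-bar) = (+)_{i=-1}^n Z l_i, realised as column vectors 'cV[int]_(n+2);
   coordinate 0 <-> l_{-1}, coordinate 1 <-> l_0, coordinate j+2 <-> l_{j+1}. *)
Definition idx_m1 n : 'I_n.+2 := ord0.
Definition idx_0 n : 'I_n.+2 := lift ord0 ord0.
Definition idx_l n (j : 'I_n) : 'I_n.+2 := lift ord0 (lift ord0 j).

Definition bvec n (k : 'I_n.+2) : 'cV[int]_n.+2 :=
  \col_(i < n.+2) ((i == k)%:R : int).

(* Phi(g) l_c, following the formulas of the paper:
   Phi(g) l_0 = l_0,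
   Phi(g) l_{-1} = l_{-1} + (t/2) l_0 - sum_{s(i)=-1} l_i   (t = #|J|),
   Phi(g) l_v = l_u or l_0 - l_u  where u = tau^{-1}(v), according to s(u). *)
Definition Phi_img n (g : {perm sym n}) (c : 'I_n.+2) : 'cV[int]_n.+2 :=
  match unlift ord0 c with
  | None => bvec (idx_m1 n) + bvec (idx_0 n) *+ (#|Jset g| %/ 2)
            - \sum_(i in Jset g) bvec (idx_l i)
  | Some c' =>
    match unlift ord0 c' with
    | None => bvec (idx_0 n)
    | Some v =>
      let u := ((g^-1)%g (v, false)).1 in
      if u \in Jset g then bvec (idx_0 n) - bvec (idx_l u) else bvec (idx_l u)
    end
  end.

Definition Phi n (g : {perm sym n}) : 'M[int]_n.+2 :=
  \matrix_(i < n.+2, c < n.+2) Phi_img g c i ord0.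

Definition crossed_hom n (H : {set {perm sym n}}) (f : {perm sym n} -> 'cV[int]_n.+2) :=
  {in H &, forall g h, f (g * h)%g = f g + Phi g *m f h}.

Definition H1_trivial n (H : {set {perm sym n}}) : Prop :=
  forall f, crossed_hom H f ->
    exists m : 'cV[int]_n.+2, {in H, forall g, f g = Phi g *m m - m}.

Definition cond_H1 n (G : {group {perm sym n}}) : Prop :=
  forall H : {group {perm sym n}}, H \subset G -> H1_trivial H.

Definition cond_min n (G : {group {perm sym n}}) : Prop :=
  forall j : 'I_n, (j, true) \in orbit 'P G (j, false).

(* Main.v *)
Require Import Defs.
From mathcomp Require Import all_boot all_order all_algebra all_fingroup zify.
Set Implicit Arguments. Unset Strict Implicit. Unset Printing Implicit Defensive.
Import GRing.Theory.

Section Basics.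
Variable n : nat.
Implicit Types g h : {perm sym n}.

Definition tau g (u : 'I_n) : 'I_n := (g (u, false)).1.
Definition sig g (v : 'I_n) : 'I_n := ((g^-1)%g (v, false)).1.

Definition signed g := [forall x : sym n, g (x.1, ~~ x.2) == ((g x).1, ~~ (g x).2)].

Lemma WD_signed g : g \in WD n -> signed g.
Proof. by rewrite inE => /andP[]. Qed.

Lemma WD_even g : g \in WD n -> ~~ odd #|Jset g|.
Proof. by rewrite inE => /andP[]. Qed.

Lemma signedE g : signed g -> forall u b, g (u, b) = (tau g u, b (+) (u \in Jset g)).
Proof.
move=> /forallP sg u b; rewrite /tau inE.
case: b => /=.
  by move: (sg (u, false)) => /= /eqP ->; case: (g (u,false)) => a [].
by case: (g (u,false)) => a c.
Qed.

Lemma tauK g : signed g -> forall v, tau g (sig g v) = v.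
Proof.
move=> sg v; rewrite /sig.
case E: ((g^-1)%g (v, false)) => [w b] /=.
have: g (w, b) = (v, false) by rewrite -E permKV.
by rewrite signedE // /tau; case=> ->.
Qed.

Lemma sigK g : signed g -> forall u, sig g (tau g u) = u.
Proof.
move=> sg u; rewrite /sig /tau.
have := signedE sg u (u \in Jset g).
rewrite addbb /tau => E.
by rewrite -E permK.
Qed.

Lemma tau_inj g : signed g -> injective (tau g).
Proof. by move=> sg; apply: (can_inj (sigK sg)). Qed.

Lemma JsetM g h : signed g -> signed h -> forall u,
  (u \in Jset (g * h)%g) = (u \in Jset g) (+) (tau g u \in Jset h).
Proof.
move=> sg sh u; rewrite {1}inE permM signedE // signedE //=.

Qed.

Lemma tauM g h : signed g -> signed h -> forall u, tau (g * h)%g u = tau h (tau g u).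
Proof. by move=> sg sh u; rewrite {1}/tau permM signedE // signedE. Qed.

End Basics.

Section Count.
Variable n : nat.
Implicit Types g h : {perm sym n}.

Lemma cardsum (P : pred 'I_n) : #|[set u | P u]| = \sum_u (P u : nat).
Proof.
rewrite -sum1_card big_mkcond; apply: eq_bigr => u _; rewrite inE; by case: (P u).
Qed.

Lemma count_mul g h (S : {set 'I_n}) : signed g -> signed h ->
  (forall u, (tau g u \in S) = (u \in S)) ->
  #|S :&: Jset (g * h)%g| + 2 * #|[set u in S | (u \in Jset g) && (tau g u \in Jset h)]|
  = #|S :&: Jset g| + #|S :&: Jset h|.
Proof.
move=> sg sh inv.
have E (A : {set 'I_n}) : A = [set u | u \in A] by apply/setP=> u; rewrite inE.
rewrite (E (S :&: Jset (g*h)%g)) (E (S :&: Jset g)) (E (S :&: Jset h)) !cardsum.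
rewrite [X in _ = _ + X](reindex_inj (tau_inj sg)) /=.
rewrite big_distrr -!big_split /=; apply: eq_bigr => u _.
rewrite !in_setI JsetM // inv in_set.
by case: (u \in S); case: (g (u, false)).2; case: (tau g u \in Jset h).
Qed.

Lemma odd_mul_J g h (S : {set 'I_n}) : signed g -> signed h ->
  (forall u, (tau g u \in S) = (u \in S)) ->
  odd #|S :&: Jset (g * h)%g| = odd #|S :&: Jset g| (+) odd #|S :&: Jset h|.
Proof.
move=> sg sh inv; have := count_mul sg sh inv.
move=> /(congr1 odd); rewrite oddD oddD oddM /= addbF => ->.
by [].
Qed.

End Count.

Section PhiComp.
Variable n : nat.
Implicit Types g h : {perm sym n}.
Local Open Scope ring_scope.

Lemma split_sum (F : 'I_n.+2 -> int) :
  \sum_c F c = F (idx_m1 n) + F (idx_0 n) + \sum_u F (idx_l u).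
Proof. by rewrite big_ord_recl big_ord_recl addrA. Qed.

Lemma idx_cases (P : 'I_n.+2 -> Prop) :
  P (idx_m1 n) -> P (idx_0 n) -> (forall u, P (idx_l u)) -> forall i, P i.
Proof.
move=> H1 H2 H3 i; case: (unliftP ord0 i) => [j ->|-> //].
case: (unliftP ord0 j) => [k ->|->]; first exact: H3.
exact: H2.
Qed.

Lemma bvecE (k : 'I_n.+2) i j : bvec k i j = (i == k)%:R.
Proof. by rewrite mxE. Qed.

Lemma idx_l_m1 (u : 'I_n) : (idx_l u == idx_m1 n) = false.
Proof. by apply/negbTE; rewrite eq_sym neq_lift. Qed.
Lemma idx_0_m1 : (idx_0 n == idx_m1 n) = false.
Proof. by apply/negbTE; rewrite eq_sym neq_lift. Qed.
Lemma idx_m1_0 : (idx_m1 n == idx_0 n) = false.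
Proof. by apply/negbTE; rewrite neq_lift. Qed.
Lemma idx_l_0 (u : 'I_n) : (idx_l u == idx_0 n) = false.
Proof. by apply/negbTE; rewrite /idx_l /idx_0 (inj_eq (@lift_inj _ ord0)) eq_sym neq_lift. Qed.
Lemma idx_0_l (u : 'I_n) : (idx_0 n == idx_l u) = false.
Proof. by rewrite eq_sym idx_l_0. Qed.
Lemma idx_m1_l (u : 'I_n) : (idx_m1 n == idx_l u) = false.
Proof. by rewrite eq_sym idx_l_m1. Qed.
Lemma idx_l_l (u v : 'I_n) : (idx_l u == idx_l v) = (u == v).
Proof. by rewrite /idx_l !(inj_eq (@lift_inj _ ord0)). Qed.

Definition idxE := (idx_l_m1, idx_0_m1, idx_m1_0, idx_l_0, idx_0_l, idx_m1_l, idx_l_l, eqxx).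

Lemma PhiE g i c : Phi g i c = Phi_img g c i ord0.
Proof. by rewrite mxE. Qed.

Lemma Pimg0 g i : Phi_img g (idx_0 n) i ord0 = (i == idx_0 n)%:R.
Proof. by rewrite /Phi_img /idx_0 liftK unlift_none bvecE. Qed.

Lemma PimgL g v i : Phi_img g (idx_l v) i ord0 =
  if sig g v \in Jset g then (i == idx_0 n)%:R - (i == idx_l (sig g v))%:R
  else (i == idx_l (sig g v))%:R.
Proof.
rewrite /Phi_img /idx_l !liftK -/(idx_l _) /sig.
by case: ifP => _; rewrite !mxE.
Qed.

Lemma Pimgm1L g v : Phi_img g (idx_m1 n) (idx_l v) ord0 = - (v \in Jset g)%:R.
Proof.
rewrite /Phi_img /idx_m1 unlift_none !mxE mulmxnE summxE !mxE -/(idx_m1 n) !idxE.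
rewrite mul0rn !add0r; congr (- _).
under eq_bigr => i _ do rewrite bvecE idx_l_l.
case: (boolP (v \in Jset g)) => vJ.
  rewrite (bigD1 v) //= eqxx big1 ?addr0 // => i /andP[_ ne].
  by rewrite eq_sym (negbTE ne).
by rewrite big1 // => i iJ; case: eqP => // E; rewrite E iJ in vJ.
Qed.

End PhiComp.

Section Cocycle.
Variable n : nat.
Variable S : {set 'I_n}.
Implicit Types g h : {perm sym n}.
Local Open Scope ring_scope.

Definition fcol h (i : 'I_n.+2) : int :=
  match unlift ord0 i with
  | None => 0
  | Some i' => match unlift ord0 i' with
     | None => (#|S :&: Jset h| %/ 2)%N%:Z
     | Some u => - ((u \in S) && (u \in Jset h))%:R
     end
  end.

Definition fvec h : 'cV[int]_n.+2 := \col_i fcol h i.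

Lemma fvec_m1 h : fcol h (idx_m1 n) = 0.
Proof. by rewrite /fcol unlift_none. Qed.
Lemma fvec_0 h : fcol h (idx_0 n) = (#|S :&: Jset h| %/ 2)%N%:Z.
Proof. by rewrite /fcol /idx_0 liftK unlift_none. Qed.
Lemma fvec_l h u : fcol h (idx_l u) = - ((u \in S) && (u \in Jset h))%:R.
Proof. by rewrite /fcol /idx_l !liftK. Qed.

Lemma fvec_cross g h : signed g -> signed h ->
  (forall u, (tau g u \in S) = (u \in S)) ->
  ~~ odd #|S :&: Jset g| -> ~~ odd #|S :&: Jset h| ->
  fvec (g * h)%g = fvec g + Phi g *m fvec h.
Proof.
move=> sg sh inv ea eb.
apply/matrixP => i j; rewrite (ord1 j) !mxE split_sum !mxE fvec_m1 mulr0 add0r fvec_0 Pimg0.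
under eq_bigr => v _ do rewrite !mxE PimgL fvec_l.
rewrite (reindex_inj (tau_inj sg)) /=.
under eq_bigr => w _ do rewrite sigK // inv.
move: i; apply: idx_cases.
- rewrite !fvec_m1 idx_m1_0 mul0r !add0r big1 // => w _.
  by rewrite idx_m1_l; case: ifP; rewrite ?subrr mul0r.
- rewrite !fvec_0 eqxx mul1r.
  under eq_bigr => w _ do rewrite idx_0_l subr0.
  have cnt := count_mul sg sh inv.
  set d := #|S :&: Jset (g * h)%g| in cnt *.
  set a := #|S :&: Jset g| in cnt ea *.
  set b := #|S :&: Jset h| in cnt eb *.
  set c := #|_| in cnt.
  have -> : \sum_w (if w \in Jset g then 1 else 0) * - ((w \in S) && (tau g w \in Jset h))%:R
            = - (c%:Z) :> int.
    rewrite /c cardsum -natz natr_sum -sumrN; apply: eq_bigr => w _.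
    by case: (w \in Jset g); case: (w \in S); case: (tau g w \in Jset h); rewrite /= ?mul1r ?mul0r ?oppr0.
  have ha : (a %% 2 = 0)%N by rewrite modn2 (negbTE ea).
  have hb : (b %% 2 = 0)%N by rewrite modn2 (negbTE eb).
  lia.
- move=> u; rewrite !fvec_l idx_l_0 mul0r add0r.
  rewrite (bigD1 u) //= big1 ?addr0; last first.
    by move=> w /negbTE ne; rewrite idx_l_l eq_sym ne; case: ifP; rewrite ?subrr mul0r.
  rewrite idx_l_l eqxx JsetM //.
  by case: (u \in S); case: (u \in Jset g); case: (tau g u \in Jset h);
    rewrite /= ?mul1r ?mul0r ?oppr0 ?add0r ?addr0 ?sub0r ?mulN1r ?opprK ?subrr.
Qed.

End Cocycle.

Section NonPrinc.
Variable n : nat.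
Implicit Types g h : {perm sym n}.
Local Open Scope ring_scope.

Lemma rowPm g (m : 'cV[int]_n.+2) v : signed g ->
  (Phi g *m m) (idx_l v) 0 = - (v \in Jset g)%:R * m (idx_m1 n) 0
     + (if v \in Jset g then -1 else 1) * m (idx_l (tau g v)) 0.
Proof.
move=> sg; rewrite !mxE split_sum !mxE Pimgm1L Pimg0 idx_l_0 mul0r addr0.
congr (_ + _).
under eq_bigr => w _ do rewrite mxE PimgL.
rewrite (reindex_inj (tau_inj sg)) /=.
under eq_bigr => w _ do rewrite sigK //.
rewrite (bigD1 v) //= big1 ?addr0; last first.
  by move=> w /negbTE ne; rewrite idx_l_l eq_sym ne; case: ifP; rewrite ?subrr mul0r.
by rewrite idx_l_l eqxx; case: ifP; rewrite ?sub0r.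
Qed.

Lemma card_in_sum (T J : {set 'I_n}) :
  #|T :&: J|%:R = \sum_(v in T) (v \in J)%:R :> int.
Proof.
rewrite -sum1_card natr_sum big_mkcond [RHS]big_mkcond /=; apply: eq_bigr => v _.
by rewrite in_setI; case: (v \in T); case: (v \in J).
Qed.

Lemma parity_witness (S T : {set 'I_n}) h (m : 'cV[int]_n.+2) (s : bool) :
  signed h -> fvec S h = Phi h *m m - m ->
  (forall u, (tau h u \in T) = (u \in T)) ->
  (forall u, u \in T -> (u \in S) = s) ->
  exists K : int, (m (idx_m1 n) 0 - s%:R) * #|T :&: Jset h|%:R = 2 * K.
Proof.
move=> sh Hm invT sT.
set beta := m (idx_m1 n) 0.
have E v : v \in T -> (v \in Jset h)%:R * (beta - s%:R) =
   m (idx_l (tau h v)) 0 - m (idx_l v) 0 - 2 * ((v \in Jset h)%:R * m (idx_l (tau h v)) 0).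
  move=> vT; have := congr1 (fun M : 'cV[int]_n.+2 => M (idx_l v) 0) Hm => /=.
  rewrite mxE fvec_l [X in _ = X]mxE [X in _ = X + _]rowPm // mxE (sT v vT) -/beta.
  by case: (v \in Jset h); case: (s); rewrite /= ?mul1r ?mul0r ?oppr0 ?mulN1r ?mulNr ?mul1r; lia.
exists (- \sum_(v in T) (v \in Jset h)%:R * m (idx_l (tau h v)) 0).
rewrite card_in_sum mulrC mulr_suml (eq_bigr _ E).
rewrite !sumrB -mulr_sumr.
have -> : \sum_(v in T) m (idx_l (tau h v)) 0 = \sum_(v in T) m (idx_l v) 0.
  rewrite [RHS](reindex_inj (tau_inj sh)) /=.
  by apply: eq_bigl => v; rewrite invT.
by rewrite subrr sub0r mulrN.
Qed.

End NonPrinc.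

Section NotH1.
Variable n : nat.
Local Open Scope ring_scope.

Lemma odd_eq (c : nat) : odd c -> c = (2 * c./2 + 1)%N.
Proof. move=> oc; rewrite -{1}(odd_double_half c) oc -muln2; lia. Qed.

Lemma not_H1 (H : {group {perm sym n}}) (S T1 T2 : {set 'I_n}) h1 h2 :
  H \subset WD n ->
  (forall h, h \in H -> forall u, (tau h u \in S) = (u \in S)) ->
  (forall h, h \in H -> ~~ odd #|S :&: Jset h|) ->
  h1 \in H -> (forall u, (tau h1 u \in T1) = (u \in T1)) -> T1 \subset S ->
  odd #|T1 :&: Jset h1| ->
  h2 \in H -> (forall u, (tau h2 u \in T2) = (u \in T2)) -> [disjoint T2 & S] ->
  odd #|T2 :&: Jset h2| ->
  ~ H1_trivial H.
Proof.
move=> sHW invS evS h1H i1 s1 o1 h2H i2 d2 o2 Htr.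
have sgn h : h \in H -> signed h by move=> hH; apply: WD_signed; apply: (subsetP sHW).
have cr : crossed_hom H (fvec S).
  move=> g h gH hH; apply: fvec_cross; auto.
have [m Hm] := Htr _ cr.
have [K1 E1] := @parity_witness n S T1 h1 m true (sgn _ h1H) (Hm _ h1H) i1
   (fun u uT => subsetP s1 u uT).
have [K2 E2] := @parity_witness n S T2 h2 m false (sgn _ h2H) (Hm _ h2H) i2
   (fun u uT => disjointFr d2 uT).
move: E1 E2; rewrite (odd_eq o1) (odd_eq o2) !natz.
set b := m (idx_m1 n) 0; set q1 := _./2; set q2 := _./2.
rewrite /= ; lia.
Qed.

End NotH1.

Section F2.
Variable gT : finGroupType.
Variable G : {group gT}.
Variables c1 c2 c3 : gT -> bool.
Hypothesis h1 : {in G &, forall x y, c1 (x * y)%g = c1 x (+) c1 y}.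
Hypothesis h2 : {in G &, forall x y, c2 (x * y)%g = c2 x (+) c2 y}.
Hypothesis h3 : {in G &, forall x y, c3 (x * y)%g = c3 x (+) c3 y}.

Lemma L3 y x2 x3 : y \in G -> x2 \in G -> x3 \in G -> c1 y -> ~~ c2 y -> ~~ c3 y ->
  c2 x2 -> c3 x3 -> exists2 g, g \in G & [&& c1 g, c2 g & c3 g].
Proof.
move=> yG x2G x3G a1 a2 a3 b2 b3.
have G23 := groupM x2G x3G.
have G2y := groupM x2G yG.
have G3y := groupM x3G yG.
have G23y := groupM G23 yG.
move: a2 a3 => /negbTE a2 /negbTE a3.
case E1: (c1 x2); case E3: (c3 x2); case F1: (c1 x3); case F2: (c2 x3);
  first [ exists x2; [done | by rewrite ?h1 ?h2 ?h3 ?E1 ?E3 ?F1 ?F2 ?a1 ?a2 ?a3 ?b2 ?b3]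
        | exists (x2 * y)%g; [done | by rewrite ?h1 ?h2 ?h3 ?E1 ?E3 ?F1 ?F2 ?a1 ?a2 ?a3 ?b2 ?b3]
        | exists x3; [done | by rewrite ?h1 ?h2 ?h3 ?E1 ?E3 ?F1 ?F2 ?a1 ?a2 ?a3 ?b2 ?b3]
        | exists (x3 * y)%g; [done | by rewrite ?h1 ?h2 ?h3 ?E1 ?E3 ?F1 ?F2 ?a1 ?a2 ?a3 ?b2 ?b3]
        | exists (x2 * x3)%g; [done | by rewrite ?h1 ?h2 ?h3 ?E1 ?E3 ?F1 ?F2 ?a1 ?a2 ?a3 ?b2 ?b3]
        | exists (x2 * x3 * y)%g; [done | by rewrite ?h1 ?h2 ?h3 ?E1 ?E3 ?F1 ?F2 ?a1 ?a2 ?a3 ?b2 ?b3] ].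
Qed.
End F2.

Lemma F2_main (gT : finGroupType) (G : {group gT}) (c1 c2 c3 : gT -> bool) :
  {in G &, forall x y, c1 (x * y)%g = c1 x (+) c1 y} ->
  {in G &, forall x y, c2 (x * y)%g = c2 x (+) c2 y} ->
  {in G &, forall x y, c3 (x * y)%g = c3 x (+) c3 y} ->
  forall x1 x2 x3 y, x1 \in G -> x2 \in G -> x3 \in G -> y \in G ->
  c1 x1 -> c2 x2 -> c3 x3 -> c1 y (+) c2 y (+) c3 y ->
  exists2 g, g \in G & [&& c1 g, c2 g & c3 g].
Proof.
move=> h1 h2 h3 x1 x2 x3 y x1G x2G x3G yG b1 b2 b3.
case A1: (c1 y); case A2: (c2 y); case A3: (c3 y) => //= _.
- by exists y => //; rewrite A1 A2 A3.
- exact: (@L3 _ G c1 c2 c3 h1 h2 h3 y x2 x3 yG x2G x3G A1 (negbT A2) (negbT A3) b2 b3).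
- have [g gG /and3P[e2 e1 e3]] :=
    @L3 _ G c2 c1 c3 h2 h1 h3 y x1 x3 yG x1G x3G A2 (negbT A1) (negbT A3) b1 b3.
  by exists g; rewrite ?e1 ?e2 ?e3.
- have [g gG /and3P[e3 e1 e2]] :=
    @L3 _ G c3 c1 c2 h3 h1 h2 y x1 x2 yG x1G x2G A3 (negbT A1) (negbT A2) b1 b2.
  by exists g; rewrite ?e1 ?e2 ?e3.
Qed.

Lemma mk_disj (T : finType) (A B : {set T}) :
  (forall x, x \in A -> x \in B -> False) -> [disjoint A & B].
Proof. by move=> H; apply/pred0P => x /=; apply/negP => /andP[/H]. Qed.

Lemma card_union_J (T : finType) (A B J : {set T}) : [disjoint A & B] ->
  #|(A :|: B) :&: J| = #|A :&: J| + #|B :&: J|.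
Proof.
move=> d; rewrite setIUl cardsU.
have -> : (A :&: J) :&: (B :&: J) = set0.
  apply/setP => x; rewrite !inE; case xA: (x \in A) => //=.
  by rewrite (disjointFr d xA) andbF.
by rewrite cards0 subn0.
Qed.

Lemma Jset1 n : Jset (1%g : {perm sym n}) = set0.
Proof. by apply/setP => u; rewrite !inE perm1. Qed.

Section Main.
Variable n : nat.
Variable G : {group {perm sym n}}.
Hypothesis sGW : G \subset WD n.
Hypothesis min : cond_min G.

Lemma sgnG g : g \in G -> signed g.
Proof. by move=> gG; apply: WD_signed; apply: (subsetP sGW). Qed.

Lemma orb_pm v b : orbit 'P G (v, b) = orbit 'P G (v, false).
Proof. by case: b => //; apply/orbit_eqP; apply: min. Qed.

Lemma orb_tau g v : g \in G -> orbit 'P G (tau g v, false) = orbit 'P G (v, false).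
Proof.
move=> gG; rewrite -(orb_pm _ (v \in Jset g)).
have <- : g (v, false) = (tau g v, v \in Jset g) by rewrite signedE //; apply: sgnG.
by rewrite -[g (v, false)]/('P%act (v, false) g) orbit_act.
Qed.

Definition Ob (u : 'I_n) : {set 'I_n} := [set v | (v, false) \in orbit 'P G (u, false)].

Lemma Ob_mem v u : (v \in Ob u) = (orbit 'P G (v, false) == orbit 'P G (u, false)).
Proof. by rewrite inE; apply/orbit_eqP/eqP. Qed.

Lemma Ob_inv g u : g \in G -> forall v, (tau g v \in Ob u) = (v \in Ob u).
Proof. by move=> gG v; rewrite !Ob_mem orb_tau. Qed.

Lemma Ob_self u : u \in Ob u.
Proof. by rewrite Ob_mem. Qed.

Lemma Ob_disj u w : orbit 'P G (u, false) != orbit 'P G (w, false) -> [disjoint Ob u & Ob w].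
Proof.
move=> D; apply: mk_disj => v; rewrite !Ob_mem => /eqP a /eqP b.
by move: D; rewrite -a -b eqxx.
Qed.

Lemma Ob_notin u w : orbit 'P G (u, false) != orbit 'P G (w, false) -> w \notin Ob u.
Proof. by rewrite Ob_mem eq_sym. Qed.

Lemma min_elem u : exists2 h, h \in G & tau h u = u /\ u \in Jset h.
Proof.
have /orbitP [h hG E] := min u.
have E2 : h (u, false) = (u, true) := E.
by exists h => //; rewrite /tau inE E2.
Qed.

Lemma single_inv (h : {perm sym n}) (u : 'I_n) : signed h -> tau h u = u ->
  forall v, (tau h v \in [set u]) = (v \in [set u]).
Proof. by move=> sh E v; rewrite !inE -{1}E (inj_eq (tau_inj sh)). Qed.

Lemma single_odd (h : {perm sym n}) (u : 'I_n) : u \in Jset h -> odd #|[set u] :&: Jset h|.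
Proof.
move=> uJ; have sub : [set u] \subset Jset h by rewrite sub1set.
by rewrite (setIidPl sub) cards1.
Qed.

Lemma chi_hom (S : {set 'I_n}) : (forall g, g \in G -> forall v, (tau g v \in S) = (v \in S)) ->
  {in G &, forall x y, odd #|S :&: Jset (x * y)%g| = odd #|S :&: Jset x| (+) odd #|S :&: Jset y|}.
Proof. by move=> inv x y xG yG; apply: odd_mul_J; [apply: sgnG|apply: sgnG|apply: inv]. Qed.

Lemma caseB1 u w : orbit 'P G (u, false) != orbit 'P G (w, false) ->
  (forall g, g \in G -> ~~ odd #|Ob u :&: Jset g|) -> ~ H1_trivial G.
Proof.
move=> D ev.
have [h1 h1G [t1 j1]] := min_elem u.
have [h2 h2G [t2 j2]] := min_elem w.
apply: (@not_H1 n G (Ob u) [set u] [set w] h1 h2 sGW) => //.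
- by move=> h hG; apply: Ob_inv.
- by apply: single_inv => //; apply: sgnG.
- by rewrite sub1set Ob_self.
- exact: single_odd.
- by apply: single_inv => //; apply: sgnG.
- by rewrite disjoints1 Ob_notin.
- exact: single_odd.
Qed.


Lemma caseB2 u1 u2 u3 u4 :
  orbit 'P G (u1, false) != orbit 'P G (u2, false) ->
  orbit 'P G (u1, false) != orbit 'P G (u3, false) ->
  orbit 'P G (u2, false) != orbit 'P G (u3, false) ->
  orbit 'P G (u1, false) != orbit 'P G (u4, false) ->
  orbit 'P G (u2, false) != orbit 'P G (u4, false) ->
  orbit 'P G (u3, false) != orbit 'P G (u4, false) ->
  (forall g, g \in G -> ~~ (odd #|Ob u1 :&: Jset g| (+) odd #|Ob u2 :&: Jset g| (+) odd #|Ob u3 :&: Jset g|)) ->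
  ~ H1_trivial G.
Proof.
move=> D12 D13 D23 D14 D24 D34 ev.
have [h1 h1G [t1 j1]] := min_elem u1.
have [h2 h2G [t2 j2]] := min_elem u4.
have d12 : [disjoint Ob u1 :|: Ob u2 & Ob u3].
  apply: mk_disj => v; rewrite in_setU => /orP[] a b.
    by move: (Ob_disj D13) => /disjointFr /(_ a); rewrite b.
  by move: (Ob_disj D23) => /disjointFr /(_ a); rewrite b.
apply: (@not_H1 n G (Ob u1 :|: Ob u2 :|: Ob u3) [set u1] [set u4] h1 h2 sGW) => //.
- by move=> h hG v; rewrite !in_setU !Ob_inv.
- move=> h hG; rewrite card_union_J // card_union_J ?Ob_disj // !oddD.
  exact: ev.
- by apply: single_inv => //; apply: sgnG.
- by rewrite sub1set !in_setU Ob_self.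
- exact: single_odd.
- by apply: single_inv => //; apply: sgnG.
- by rewrite disjoints1 !in_setU !negb_or !Ob_notin.
- exact: single_odd.
Qed.

Lemma caseA u1 u2 u3 g :
  orbit 'P G (u1, false) != orbit 'P G (u2, false) ->
  orbit 'P G (u1, false) != orbit 'P G (u3, false) ->
  orbit 'P G (u2, false) != orbit 'P G (u3, false) ->
  g \in G -> odd #|Ob u1 :&: Jset g| -> odd #|Ob u2 :&: Jset g| -> odd #|Ob u3 :&: Jset g| ->
  ~ H1_trivial <[g]>%g.
Proof.
move=> D12 D13 D23 gG o1 o2 o3.
have sC : (<[g]> \subset G)%g by rewrite cycle_subG.
have inv : forall h, h \in G -> forall v, (tau h v \in Ob u1 :|: Ob u2) = (v \in Ob u1 :|: Ob u2).
  by move=> h hG v; rewrite !in_setU !Ob_inv.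
apply: (@not_H1 n <[g]>%G (Ob u1 :|: Ob u2) (Ob u1) (Ob u3) g g).
- exact: subset_trans sC sGW.
- by move=> h /(subsetP sC) hG; apply: inv.
- move=> h /cycleP [k ->]; elim: k => [|k IH].
    by rewrite expg0 Jset1 setI0 cards0.
  rewrite expgSr chi_hom ?groupX // (negbTE IH) /=.
  by rewrite card_union_J ?Ob_disj // oddD o1 o2.
- exact: cycle_id.
- by apply: Ob_inv.
- exact: subsetUl.
- exact: o1.
- exact: cycle_id.
- by apply: Ob_inv.
- apply: mk_disj => v a; rewrite in_setU => /orP[] b.
    by move: (Ob_disj D13) => /disjointFr /(_ b); rewrite a.
  by move: (Ob_disj D23) => /disjointFr /(_ b); rewrite a.
- exact: o3.
Qed.

End Main.

Lemma pick_rm (T : finType) (X : {set T}) k : k.+1 < #|X| -> exists2 A, A \in X & k < #|X :\ A|.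
Proof.
move=> lt; have : 0 < #|X| by apply: leq_ltn_trans lt.
case/card_gt0P => A AX; exists A => //.
by move: lt; rewrite (cardsD1 A X) AX add1n ltnS.
Qed.

Lemma four_distinct (T : finType) (X : {set T}) : 3 < #|X| ->
  exists A1 A2 A3 A4, [/\ A1 \in X, A2 \in X, A3 \in X & A4 \in X] /\
   ([/\ A1 != A2, A1 != A3 & A1 != A4] /\ [/\ A2 != A3, A2 != A4 & A3 != A4]).
Proof.
move=> c.
have [A1 A1X c1] := pick_rm c.
have [A2 A2X c2] := pick_rm c1.
have [A3 A3X c3] := pick_rm c2.
have [A4 A4X] := card_gt0P c3.
move: A2X A3X A4X; rewrite !in_setD1.
move=> /andP[n21 A2X] /andP[n32 /andP[n31 A3X]] /andP[n43 /andP[n42 /andP[n41 A4X]]].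
exists A1, A2, A3, A4; split; first by [].
by split; split; rewrite // eq_sym.
Qed.

Theorem theorem4p3 (n : nat) (G : {group {perm sym n}}) :
  G \subset WD n -> cond_H1 G -> cond_min G ->
  #|orbit 'P G @: [set: sym n]| <= 3.
Proof.
move=> sGW H1 min; rewrite leqNgt; apply/negP => big.
have [A1 [A2 [A3 [A4 [[X1 X2 X3 X4] [[D12 D13 D14] [D23 D24 D34]]]]]]] := four_distinct big.
move: X1 X2 X3 X4 D12 D13 D14 D23 D24 D34.
move=> /imsetP[[u1 b1] _ ->] /imsetP[[u2 b2] _ ->] /imsetP[[u3 b3] _ ->] /imsetP[[u4 b4] _ ->].
rewrite !(orb_pm min) => D12 D13 D14 D23 D24 D34.
have H1G : H1_trivial G by apply: H1.
pose chi u g := odd #|Ob G u :&: Jset g|.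
have hom u : {in G &, forall x y, chi u (x * y)%g = chi u x (+) chi u y}.
  by apply: chi_hom => // g gG; apply: Ob_inv.
case: (boolP [exists (g | g \in G), [&& chi u1 g, chi u2 g & chi u3 g]]).
  case/exists_inP => g gG /and3P[o1 o2 o3].
  apply: (caseA sGW min D12 D13 D23 gG o1 o2 o3).
  by apply: H1; rewrite cycle_subG.
move=> nA.
have [/forall_inP ev|n1] := boolP [forall (g | g \in G), ~~ chi u1 g].
  by apply: (caseB1 sGW min D12 ev).
have [/forall_inP ev|n2] := boolP [forall (g | g \in G), ~~ chi u2 g].
  by apply: (@caseB1 n G sGW min u2 u1 _ ev) => //; rewrite eq_sym.
have [/forall_inP ev|n3] := boolP [forall (g | g \in G), ~~ chi u3 g].
  by apply: (@caseB1 n G sGW min u3 u1 _ ev) => //; rewrite eq_sym.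
have [/forall_inP ev|n4] := boolP [forall (g | g \in G), ~~ (chi u1 g (+) chi u2 g (+) chi u3 g)].
  by apply: (caseB2 sGW min D12 D13 D23 D14 D24 D34 ev).
move: n1 n2 n3 n4.
rewrite !negb_forall_in => /exists_inP[x1 x1G /negPn o1] /exists_inP[x2 x2G /negPn o2]
  /exists_inP[x3 x3G /negPn o3] /exists_inP[y yG /negPn oy].
have [g gG ok] := F2_main (hom u1) (hom u2) (hom u3) x1G x2G x3G yG o1 o2 o3 oy.
by move/negP: nA; apply; apply/exists_inP; exists g.
Qed.
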